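(* In the network model described in the context, let $\pi$ be an admissible cyclic policy with maximum inter-scheduling times $(k_e^{\pi})_{e\in E}$ and slice widths $(w_{i,e})$. If \begin{itemize} \item $\sum_{e\in\mathcal{T}^{(i)}}k_e^{\pi}\le\tau_i$ for all $f_i\in\mathcal{F}$, \item $\sum_{f_i:e\in\mathcal{T}^{(i)}}w_{i,e}\le c_e$ for all $e\in E$, \item $w_{i,e}=\lambda_i k_e^{\pi}$ for all $f_i\in\mathcal{F}$, $e\in\mathcal{T}^{(i)}$, \item $\mu^\pi(t)\in\mathcal{M}$ for all $0\le t<K^\pi$, \end{itemize} then $\pi$ supports $\mathcal{F}$. Furthermore, if in addition $\pi$ is a regular schedule, then all slices equal their bottleneck values, i.e. $w_{i,e}=\lambda_i/\bar{\mu}^\pi_e$ for all $f_i\in\mathcal{F}$, $e\in\mathcal{T}^{(i)}$.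
   Context: Network model: directed graph $G=(V,E)$, slotted time, link capacities $c_e$, interference given by a conflict graph on links with feasible activation sets $\mathcal{M}$ (its independent sets). Flows $f_i\in\mathcal{F}$ have fixed routes $\mathcal{T}^{(i)}$, deterministic fluid arrival rates $\lambda_i>0$ per slot at the source (arrivals during slots $0\le t\le T$), and deadlines $\tau_i$. Link $e\in\mathcal{T}^{(i)}$ reserves a slice $w_{i,e}$ for $f_i$ with its own FCFS queue (initially empty). An admissible policy activates $\mu^\pi(t)\in\mathcal{M}$ each slot and is work-conserving (an activated link serves $\min\{Q_{i,e}(t),w_{i,e}\}$ from each slice queue; served units proceed to the next link). A cyclic policy satisfies $\mu^\pi(t)=\mu^\pi(t+K^\pi)$ for all $t\ge0$; $\bar{\mu}^\pi_e=\frac1{K^\pi}\sum_{t=0}^{K^\pi-1}\mu^\pi_e(t)$. The maximum inter-scheduling time $k_e^\pi$ of link $e$ is the largest number of slots between two consecutive activations of $e$ (cyclically). $\pi$ is a regular schedule if $k^\pi_e=1/\bar{\mu}^\pi_e$ for all $e\in E$ (all inter-scheduling times of each link are equal). A policy supports $\mathcal{F}$ iff every packet of every flow $f_i$ is delivered to its destination within $\tau_i$ slots of its arrival, for any finite horizon $T$. *)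

(* Defs.v *)
From mathcomp Require Import all_boot all_order all_algebra.
Set Implicit Arguments. Unset Strict Implicit. Unset Printing Implicit Defensive.
Import Order.TTheory GRing.Theory Num.Theory.
Local Open Scope ring_scope.

Definition is_route (V E : finType) (src dst : E -> V) (r : seq E) : bool :=
  [&& r != [::], uniq r & sorted (fun a b => dst a == src b) r].

Definition feasible_act (E : finType) (conf : rel E) (A : {set E}) : bool :=
  [forall x in A, forall y in A, ~~ conf x y].

Definition cyclic_sched (E : finType) (mu : nat -> {set E}) (K : nat) : Prop :=
  (0 < K)%N /\ forall t, mu (t + K)%N = mu t.

(* For an activation slot t of link e, the number of slots until the next
   activation of e (in 1..K; = K if e is activated once per cycle). *)
Definition next_gap (E : finType) (mu : nat -> {set E}) (K : nat) (e : E) (t : nat) : nat :=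
  head K [seq d <- iota 1 K | e \in mu (t + d)%N].

(* Maximum inter-scheduling time k_e of link e (cyclically); meaningful
   (finite) only when e is activated in the cycle, see [scheduled]. *)
Definition max_inter_sched (E : finType) (mu : nat -> {set E}) (K : nat) (e : E) : nat :=
  \max_(t < K | e \in mu t) next_gap mu K e t.

(* e is activated at least once per cycle (i.e. k_e < +oo). *)
Definition scheduled (E : finType) (mu : nat -> {set E}) (K : nat) (e : E) : bool :=
  [exists t : 'I_K, e \in mu t].

Definition avg_act (R : realFieldType) (E : finType) (mu : nat -> {set E}) (K : nat) (e : E) : R :=
  (#|[set t : 'I_K | e \in mu t]|)%:R / K%:R.

(* Regular schedule: k_e = 1 / \bar mu_e for every link
   (for a never-activated link both sides are "infinite"; here both are 0). *)
Definition regular_sched (R : realFieldType) (E : finType) (mu : nat -> {set E}) (K : nat) : Prop :=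
  forall e : E, (max_inter_sched mu K e)%:R = (avg_act R mu K e)^-1.

Definition arrival (R : realFieldType) (F : finType) (lam : F -> R) (T : nat) (i : F) (t : nat) : R :=
  if (t <= T)%N then lam i else 0.

Definition pred_link (E : finType) (r : seq E) (e : E) : option E :=
  if index e r is n.+1 then Some (nth e r n) else None.

(* State of the network at the start of slot t:
   (Q, S) with Q i e = content of the slice queue of flow i at link e at the
   start of slot t, and S i e = amount served from that queue in slot t-1
   (0 when t = 0). *)
Fixpoint net_state (R : realFieldType) (F E : finType) (route : F -> seq E)
    (lam : F -> R) (w : F -> E -> R) (mu : nat -> {set E}) (T t : nat)
    : (F -> E -> R) * (F -> E -> R) :=
  match t with
  | 0 => (fun _ _ => 0, fun _ _ => 0)
  | t'.+1 =>
      let (Q, Sp) := net_state route lam w mu T t' in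
      let inp := fun i e =>
        if e \in route i then
          match pred_link (route i) e with
          | None => arrival lam T i t'
          | Some e' => Sp i e'
          end
        else 0 in
      let B := fun i e => Q i e + inp i e in
      let S := fun i e =>
        if (e \in mu t') && (e \in route i) then Num.min (B i e) (w i e) else 0 in
      (fun i e => B i e - S i e, S)
  end.

Definition served (R : realFieldType) (F E : finType) (route : F -> seq E)
    (lam : F -> R) (w : F -> E -> R) (mu : nat -> {set E}) (T : nat)
    (i : F) (e : E) (t : nat) : R :=
  (net_state route lam w mu T t.+1).2 i e.

Definition delivered (R : realFieldType) (F E : finType) (route : F -> seq E)
    (lam : F -> R) (w : F -> E -> R) (mu : nat -> {set E}) (T : nat)
    (i : F) (t : nat) : R :=
  match ohead (rev (route i)) with
  | Some el => \sum_(u < t.+1) served route lam w mu T i el u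
  | None => 0
  end.

(* The policy supports the flows: for every finite horizon T, every flow i and
   every arrival slot t, all fluid of flow i that arrived in slots 0..t has
   been delivered by the end of slot t + tau_i - 1, i.e. (queues being FCFS)
   each packet arriving in slot t is delivered within tau_i slots
   (slots t, t+1, ..., t + tau_i - 1). *)
Definition supports (R : realFieldType) (F E : finType) (route : F -> seq E)
    (lam : F -> R) (tau : F -> nat) (w : F -> E -> R) (mu : nat -> {set E}) : Prop :=
  forall (T : nat) (i : F) (t : nat), (t <= T)%N ->
    \sum_(u < t.+1) arrival lam T i u <= delivered route lam w mu T i (t + tau i).-1.

(* Main.v *)
Require Import Defs.
From mathcomp Require Import all_boot all_order all_algebra.
From mathcomp Require Import ring lra zify.
Import Order.TTheory GRing.Theory Num.Theory.
Set Implicit Arguments. Unset Strict Implicit. Unset Printing Implicit Defensive.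
Local Open Scope ring_scope.


Lemma addr_min_helper (R : realFieldType) (d a b : R) :
  d + Num.min a b = Num.min (d + a) (d + b).
Proof.
rewrite /Order.min ltrD2l; by case: ifP.
Qed.

Section Link.
Variables (R : realFieldType) (inp S Q : nat -> R) (act : nat -> bool) (w : R) (k : nat).
Hypotheses (HQ0 : Q 0 = 0)
  (HS : forall u, S u = if act u then Num.min (Q u + inp u) w else 0)
  (HQ : forall u, Q u.+1 = Q u + inp u - S u)
  (HS0 : forall u, 0 <= S u).

Definition Cc t := \sum_(u < t) inp u.
Definition Dc t := \sum_(u < t) S u.

Lemma QE t : Q t = Cc t - Dc t.
Proof.
elim: t => [|t IH]; first by rewrite /Cc /Dc !big_ord0 HQ0 subrr.
rewrite /Cc /Dc !big_ord_recr /= HQ IH /Cc /Dc; ring.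
Qed.

Lemma Dc_ge0 t : 0 <= Dc t.
Proof. by apply: sumr_ge0 => u _. Qed.

Lemma Dc_monoD a m : Dc a <= Dc (a + m).
Proof.
elim: m => [|m IH]; first by rewrite addn0.
apply: (le_trans IH); rewrite addnS /Dc big_ord_recr /= lerDl //.
Qed.

Lemma Dc_mono a b : (a <= b)%N -> Dc a <= Dc b.
Proof. by move=> h; rewrite -(subnKC h) Dc_monoD. Qed.

Lemma Dc_act s : act s -> Dc s.+1 = Num.min (Cc s.+1) (Dc s + w).
Proof.
move=> hs.
rewrite {1}/Dc big_ord_recr /= HS hs QE -/(Dc s) addr_min_helper /Cc big_ord_recr /=.
congr Num.min; rewrite /Cc; ring.
Qed.

Lemma link_main
  (Hwin : forall s, exists2 d, (d < k)%N & act (s + d))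
  (H : nat -> R)
  (Hmono : forall a b, (a <= b)%N -> H a <= H b)
  (Hk : forall y, H (y + k)%N <= H y + w)
  (Hz : forall t, (t < k)%N -> H t = 0)
  (HC : forall s, H (s + k)%N <= Cc s.+1) :
  forall t, H t <= Dc t.
Proof.
elim/ltn_ind => t IH.
case: (ltnP t k) => htk; first by rewrite Hz // Dc_ge0.
have [d hd ha] := Hwin (t - k)%N.
set s := (t - k + d)%N in ha.
have hst : (s < t)%N by rewrite /s; lia.
suff h : H t <= Dc s.+1 by apply: (le_trans h); exact: Dc_mono.
rewrite Dc_act // le_min; apply/andP; split.
- apply: le_trans (HC s); apply: Hmono; rewrite /s; lia.
- apply: le_trans (_ : H s + w <= _); last by rewrite lerD2r IH.
  apply: le_trans (Hk s); apply: Hmono; rewrite /s; lia.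
Qed.
End Link.


Lemma head_filter_mem (T : eqType) (P : pred T) x0 s :
  head x0 (filter P s) \in x0 :: filter P s.
Proof. by case: (filter P s) => [|y l] /=; rewrite !in_cons eqxx ?orbT. Qed.

Section Sched.
Variables (E : finType) (mu : nat -> {set E}) (K : nat) (e : E).
Hypothesis cyc : cyclic_sched mu K.

Lemma K_gt0 : (0 < K)%N. Proof. by case: cyc. Qed.

Lemma mu_per t m : mu (t + m * K)%N = mu t.
Proof.
elim: m => [|m IH]; first by rewrite mul0n addn0.
by rewrite mulSn (addnC K) addnA (proj2 cyc) IH.
Qed.

Lemma mu_mod t : mu t = mu (t %% K)%N.
Proof. by rewrite {1}(divn_eq t K) addnC mu_per. Qed.

Lemma next_gap_prop t : e \in mu t ->
  (1 <= next_gap mu K e t <= K)%N && (e \in mu (t + next_gap mu K e t)%N).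
Proof.
move=> he; have := @head_filter_mem nat (fun d => e \in mu (t + d)%N) K (iota 1 K).
rewrite /next_gap in_cons => /orP [/eqP -> | ].
  by rewrite K_gt0 leqnn /= (proj2 cyc).
rewrite mem_filter mem_iota => /andP [-> /andP [h1 h2]]; rewrite andbT; by rewrite h1 /= -ltnS.
Qed.

Definition kk := max_inter_sched mu K e.

Lemma act_next a : e \in mu a -> exists2 g, (1 <= g <= kk)%N & e \in mu (a + g)%N.
Proof.
move=> ha.
have hK := K_gt0.
have ha' : e \in mu (a %% K)%N by rewrite -mu_mod.
have /andP [/andP [g1 _] hg] := next_gap_prop ha'.
exists (next_gap mu K e (a %% K)).
  rewrite g1 /= /kk /max_inter_sched.
  exact: (@leq_bigmax_cond _ (fun t : 'I_K => e \in mu t) (fun t : 'I_K => next_gap mu K e t) (Ordinal (ltn_pmod a hK))).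
by rewrite mu_mod -modnDml -mu_mod.
Qed.

Lemma window (Hsch : scheduled mu K e) s : exists2 d, (d < kk)%N & e \in mu (s + d)%N.
Proof.
have hK := K_gt0.
case/existsP: Hsch => p hp.
set s' := (s + p * K)%N.
suff [d hd hm] : exists2 d, (d < kk)%N & e \in mu (s' + d)%N.
  by exists d => //; rewrite -(mu_per _ p) /s' addnAC.
have hps : (p <= s')%N by rewrite /s'; have := ltn_ord p; nia.
have hk1 : (1 <= kk)%N by have [g /andP [g1 gk] _] := act_next hp; lia.
have : forall n a, (a <= s')%N -> (s' - a <= n)%N -> e \in mu a ->
    exists2 d, (d < kk)%N & e \in mu (s' + d)%N.
  elim=> [|n IH] a has hn hm.
    have -> : s' = a by lia.
    by exists 0%N; rewrite ?addn0.
  case: (ltnP a s') => hlt; last first.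
    have -> : s' = a by lia.
    by exists 0%N; rewrite ?addn0.
  have [g /andP [g1 gk] hg] := act_next hm.
  case: (ltnP (a + g) s') => hag.
    apply: (IH (a + g)%N) => //; lia.
  exists (a + g - s')%N; first lia.
  by rewrite subnKC.
by move/(_ (s' - p)%N p hps (leqnn _) hp).
Qed.

End Sched.


Section Net.
Variables (R : realFieldType) (F E : finType) (route : F -> seq E) (lam : F -> R)
  (w : F -> E -> R) (mu : nat -> {set E}) (T : nat).
Local Notation ns := (net_state route lam w mu T).

Definition inpf t i e : R :=
  if e \in route i then
    match pred_link (route i) e with
    | None => arrival lam T i t
    | Some e' => (ns t).2 i e'
    end
  else 0.

Lemma nsS t i e : (ns t.+1).2 i e =
  if (e \in mu t) && (e \in route i) then Num.min ((ns t).1 i e + inpf t i e) (w i e) else 0.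
Proof. rewrite /inpf /=; by case: (net_state route lam w mu T t). Qed.

Lemma nsQ t i e : (ns t.+1).1 i e = (ns t).1 i e + inpf t i e - (ns t.+1).2 i e.
Proof. rewrite nsS /inpf /=; by case: (net_state route lam w mu T t). Qed.

Hypotheses (Hl : forall i, 0 < lam i) (Hw : forall i e, e \in route i -> 0 <= w i e).

Lemma ns_ge0 t : (forall i e, 0 <= (ns t).1 i e) /\ (forall i e, 0 <= (ns t).2 i e).
Proof.
elim: t => [|t [IH1 IH2]]; first by split => i e /=.
have hin : forall i e, 0 <= inpf t i e.
  move=> i e; rewrite /inpf; case: ifP => // _.
  case: pred_link => [e'|] //; rewrite /arrival; case: ifP => // _; exact: ltW.
have hB : forall i e, 0 <= (ns t).1 i e + inpf t i e by move=> i e; rewrite addr_ge0.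
split => i e; rewrite ?nsQ nsS; case: ifP => [/andP [_ hr]|_].
- rewrite subr_ge0 /Order.min; case: ifP => // /negbT; rewrite -leNgt //.
- by rewrite subr0.
- rewrite /Order.min; case: ifP => _; [exact: hB| exact: Hw].
- by [].
Qed.


Section Flow.
Variables (K : nat) (i : F) (x0 : E).
Hypotheses (cyc : cyclic_sched mu K) (Huniq : uniq (route i))
  (Hsch : forall e, e \in route i -> scheduled mu K e)
  (Hwk : forall e, e \in route i -> w i e = lam i * (kk mu K e)%:R).

Definition kj j := kk mu K (nth x0 (route i) j).
Definition P j := (\sum_(l < j.+1) kj l)%N.
Definition A' m := \sum_(u < m) arrival lam T i u.
Definition srv e u := served route lam w mu T i e u.

Lemma arr_ge0 u : 0 <= arrival lam T i u.
Proof. rewrite /arrival; case: ifP => // _; exact: ltW. Qed.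

Lemma A'_monoD a m : A' a <= A' (a + m).
Proof.
elim: m => [|m IH]; first by rewrite addn0.
apply: (le_trans IH); rewrite addnS /A' big_ord_recr /= lerDl arr_ge0 //.
Qed.

Lemma A'_mono a b : (a <= b)%N -> A' a <= A' b.
Proof. by move=> h; rewrite -(subnKC h) A'_monoD. Qed.

Lemma A'_lip a m : A' (a + m) <= A' a + lam i * m%:R.
Proof.
elim: m => [|m IH]; first by rewrite addn0 mulr0 addr0.
rewrite addnS /A' big_ord_recr /= -/(A' _) -addn1 natrD mulrDr mulr1 addrA.
apply: lerD => //; rewrite /arrival; case: ifP => // _; exact: ltW.
Qed.

Lemma kj_le_P j : (kj j <= P j)%N.
Proof. by rewrite /P big_ord_recr /= leq_addl. Qed.

Lemma flow_main j : (j < size (route i))%N ->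
  forall t, A' (t.+1 - P j) <= Dc (srv (nth x0 (route i) j)) t.
Proof.
elim: j => [|j IH] hj;
  set e := nth x0 (route i) _; have he : e \in route i by apply: mem_nth.
all: apply: (@link_main R (fun u => inpf u i e) (srv e) (fun u => (ns u).1 i e)
         (fun u => e \in mu u) (w i e) (kk mu K e)).
all: try done.
all: try (by move=> u; rewrite /srv /served nsS he andbT).
all: try (by move=> u; rewrite nsQ).
all: try (by move=> u; case: (ns_ge0 u.+1) => _; apply).
all: try (exact: (window cyc (Hsch he))).
all: try (by move=> a b hab; apply: A'_mono; lia).
all: try (move=> y; rewrite Hwk //; apply: le_trans (A'_lip _ _); apply: A'_mono;
          have := kj_le_P _; rewrite /kj -/e; lia).
all: try (move=> t ht; have := kj_le_P _; rewrite /kj -/e => hk;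
          have -> : (t.+1 - _ = 0)%N by lia; by rewrite /A' big_ord0).
all: move=> s; cbv beta.
- move=> hs; have := kj_le_P 0; rewrite /kj -/e => hk.
  have -> : (s.+1 - P 0 = 0)%N by lia.
  by rewrite /A' big_ord0.
- have hP : P 0 = kk mu K e by rewrite /P big_ord1.
  apply: (le_trans (A'_mono (b:=s.+1) _)); first by rewrite hP; lia.
  rewrite /A' /Cc le_eqVlt; apply/orP; left; apply/eqP/eq_bigr => u _.
  by rewrite /inpf he /pred_link index_uniq.
- move=> hs; have := kj_le_P j.+1; rewrite /kj -/e => hk.
  have -> : (s.+1 - P j.+1 = 0)%N by lia.
  by rewrite /A' big_ord0.
- have hj' : (j < size (route i))%N by lia.
  have hP : P j.+1 = (P j + kk mu K e)%N by rewrite /P big_ord_recr.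
  apply: (le_trans (A'_mono (b:=(s.+1 - P j)%N) _)); first by rewrite hP; lia.
  apply: (le_trans (IH hj' s)); rewrite le_eqVlt; apply/orP; left; apply/eqP.
  rewrite /Cc /inpf he /pred_link index_uniq // (set_nth_default x0) //.
  rewrite big_ord_recl /= add0r /Dc; apply: eq_bigr => u _.
  by rewrite /srv /served.
Qed.

End Flow.
End Net.


Lemma ohead_rev_nth (T : eqType) (x0 : T) (s : seq T) : s != [::] ->
  ohead (rev s) = Some (nth x0 s (size s).-1).
Proof. by case/lastP: s => // s' x _; rewrite rev_rcons nth_last last_rcons. Qed.

Theorem corollary5
  (R : realFieldType) (V E F : finType) (src dst : E -> V)
  (c : E -> R) (conf : rel E)
  (route : F -> seq E) (lam : F -> R) (tau : F -> nat)
  (w : F -> E -> R) (mu : nat -> {set E}) (K : nat) :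
  (forall i, is_route src dst (route i)) ->
  (forall i, 0 < lam i) ->
  (forall t, feasible_act conf (mu t)) ->
  cyclic_sched mu K ->
  (forall i e, e \in route i -> scheduled mu K e) ->
  (forall i, (\sum_(e <- route i) max_inter_sched mu K e <= tau i)%N) ->
  (forall e, \sum_(i | e \in route i) w i e <= c e) ->
  (forall i e, e \in route i -> w i e = lam i * (max_inter_sched mu K e)%:R) ->
  (forall t, (t < K)%N -> feasible_act conf (mu t)) ->
  supports route lam tau w mu /\
  (regular_sched R mu K ->
     forall i e, e \in route i -> w i e = lam i / avg_act R mu K e).
Proof.
move=> Hroute Hl _ cyc Hsch Htau _ Hwk _; split; last first.
  by move=> Hreg i e he; rewrite Hwk // (Hreg e).
move=> T i t _.
have Hw : forall i e, e \in route i -> 0 <= w i e.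
  by move=> i' e he; rewrite Hwk // mulr_ge0 // ltW.
have /andP [hne /andP [huniq _]] := Hroute i.
have [x0 hx0] : exists x0, x0 \in route i.
  by case: (route i) hne => // x l _; exists x; rewrite mem_head.
set n := size (route i).
have hn : (0 < n)%N by rewrite /n lt0n size_eq0.
have hnj : (n.-1 < n)%N by rewrite prednK.
have fm := @flow_main R F E route lam w mu T Hl Hw K i x0 cyc huniq (Hsch i) (Hwk i) _ hnj (t + tau i)%N.
have hP : P route mu K i x0 n.-1 = (\sum_(e <- route i) max_inter_sched mu K e)%N.
  by rewrite /P prednK // (big_nth x0) big_mkord.
have hk1 : (1 <= P route mu K i x0 n.-1)%N.
  apply: leq_trans (kj_le_P _ _ _ _ _ _).
  have [d hd _] := window cyc (Hsch i _ (mem_nth x0 hnj)) 0.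
  by rewrite /kj; apply: leq_ltn_trans hd.
have htP := Htau i; rewrite -hP in htP.
rewrite /delivered (ohead_rev_nth x0 hne) -/n.
have -> : (t + tau i).-1.+1 = (t + tau i)%N by rewrite prednK //; lia.
apply: le_trans fm.
apply: (A'_mono T Hl i); lia.
Qed.
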